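(* Let $Q$ be a quiver with no oriented cycles, $\theta\in\mathbb{Z}^{Q_0}$, and let $\alpha_1\ne\alpha_2\in Q_1$ be arrows with $\alpha_1^-=\alpha_2^-$ and $\alpha_1^+=\alpha_2^+$. Let $Q'$ be obtained from $Q$ by collapsing $\alpha_1,\alpha_2$ to a single arrow $\alpha$, and let $\varphi:F\to\mathcal{A}(Q,\theta)$, $\varphi':F'\to\mathcal{A}(Q',\theta)$, $\pi:F\to F'$ and $\psi_s$ be as in the context. Let $\{u_\lambda-v_\lambda\mid\lambda\in\Lambda\}$ be a set of binomials generating the ideal $\ker(\varphi')$. Then $\ker(\varphi)$ is generated by $\mathcal{G}_1\cup\mathcal{G}_2$, where $\mathcal{G}_1=\{\psi_s(u_\lambda)-\psi_s(v_\lambda)\mid\lambda\in\Lambda,\ s\in S(Q,\theta),\ x^{\pi(s)}=\varphi'(u_\lambda)\}$ and $\mathcal{G}_2=\{t_mt_n-t_{m+\varepsilon_2-\varepsilon_1}t_{n+\varepsilon_1-\varepsilon_2}\mid m,n\in\nabla(Q,\theta)\cap\mathbb{Z}^{Q_1},\ m(\alpha_1)>0,\ n(\alpha_2)>0\}$, with $\varepsilon_i\in\mathbb{Z}^{Q_1}$ the characteristic function of $\alpha_i$.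
   Context: For a quiver $Q$ (vertices $Q_0$, arrows $Q_1$, $a$ from $a^-$ to $a^+$) and $\theta\in\mathbb{Z}^{Q_0}$, $\nabla(Q,\theta)=\{x\in\mathbb{R}_{\ge0}^{Q_1}\mid\forall v:\ \theta(v)=\sum_{a^+=v}x(a)-\sum_{a^-=v}x(a)\}$; $S(Q,\theta)=\coprod_{k\ge0}\nabla(Q,k\theta)\cap\mathbb{Z}^{Q_1}$ is a monoid. $x^m=\prod_ax(a)^{m(a)}$ in $\mathbb{C}[x(a)\mid a\in Q_1]$, $\mathcal{A}(Q,\theta)$ is the subalgebra generated by $x^m$, $m\in\nabla(Q,\theta)\cap\mathbb{Z}^{Q_1}$ (it has basis $x^s$, $s\in S(Q,\theta)$), $F=\mathbb{C}[t_m\mid m\in\nabla(Q,\theta)\cap\mathbb{Z}^{Q_1}]$ and $\varphi(t_m)=x^m$; similarly $F'$, $\varphi'$, $\mathcal{A}(Q',\theta)$ for $Q'$ (note $Q'_0=Q_0$). Define $\pi:\mathbb{Z}^{Q_1}\to\mathbb{Z}^{Q'_1}$ by $\pi(m)(\alpha)=m(\alpha_1)+m(\alpha_2)$ and $\pi(m)(\beta)=m(\beta)$ for $\beta\in Q_1\setminus\{\alpha_1,\alpha_2\}=Q'_1\setminus\{\alpha\}$; it maps $S(Q,\theta)$ onto $S(Q',\theta)$, and $\pi:F\to F'$ denotes the algebra map $t_m\mapsto t_{\pi(m)}$. For each monomial $u\in F'$ and each $s\in S(Q,\theta)$ with $x^{\pi(s)}=\varphi'(u)$, a monomial $\psi_s(u)\in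 F$ is fixed such that $\pi(\psi_s(u))=u$ and $\varphi(\psi_s(u))=x^s$ (such a monomial always exists). *)

(* Defs.v *)
From HB Require Import structures.
From mathcomp Require Import all_boot all_order all_algebra.
From mathcomp Require Import reals.
From mathcomp.real_closed Require Import complex.
From mathcomp Require Import mpoly.

Set Implicit Arguments.
Unset Strict Implicit.
Unset Printing Implicit Defensive.

Import Order.TTheory GRing.Theory Num.Theory.
Local Open Scope ring_scope.

Section Quiver.
Variables (V A : finType) (src tgt : A -> V).
(* src a = a^-, tgt a = a^+ *)

Definition acyclic : Prop :=
  forall (a : A) (p : seq A),
    path (fun x y => tgt x == src y) a p -> tgt (last a p) != src a.

Definition in_nabla (theta : V -> int) (m : {ffun A -> nat}) : Prop :=
  forall v : V, theta v = \sum_(a | tgt a == v) (m a)%:Z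
                          - \sum_(a | src a == v) (m a)%:Z.

(* S(Q, theta) = coprod_k nabla(Q, k theta) cap Z^{Q_1} (as a set of lattice points) *)
Definition in_S (theta : V -> int) (s : {ffun A -> nat}) : Prop :=
  exists k : nat, in_nabla (fun v => k%:Z * theta v) s.

(* e : 'I_n -> Z^{Q_1} is a bijection onto nabla(Q,theta) cap Z^{Q_1};
   it indexes the variables t_m (m = e i) of F = K[t_{e i} | i < n]. *)
Definition enumerates (theta : V -> int) (n : nat) (e : 'I_n -> {ffun A -> nat}) : Prop :=
  injective e /\ (forall m, in_nabla theta m <-> exists i, e i = m).

Variable K : nzRingType.

Definition xmon (m : {ffun A -> nat}) : {mpoly K[#|A|]} :=
  \prod_(a : A) 'X_(enum_rank a) ^+ (m a).

End Quiver.

Definition phi (A : finType) (K : comNzRingType) (n : nat) (e : 'I_n -> {ffun A -> nat})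
  (p : {mpoly K[n]}) : {mpoly K[#|A|]} :=
  p \mPo [tuple xmon K (e i) | i < n].

Definition in_ideal (R : comNzRingType) (G : R -> Prop) (p : R) : Prop :=
  exists (k : nat) (c g : 'I_k -> R),
    (forall j, G (g j)) /\ p = \sum_(j < k) c j * g j.

Definition generates_kernel (R S : comNzRingType) (G : R -> Prop) (f : R -> S) : Prop :=
  forall p, f p = 0 <-> in_ideal G p.

Definition is_monomial (K : comNzRingType) (n : nat) (p : {mpoly K[n]}) : Prop :=
  exists mm : 'X_{1..n}, p = 'X_[mm].

(* Q'_1 = Q_1 \ {alpha_2}, where the arrow alpha_1 (as element of Q'_1) plays the
   role of the collapsed arrow alpha; src/tgt are inherited. *)
Definition arrQ' (A : finType) (a2 : A) : finType := {a : A | a != a2}.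

Definition piv (A : finType) (a1 a2 : A) (m : {ffun A -> nat}) : {ffun arrQ' a2 -> nat} :=
  [ffun b : arrQ' a2 => if val b == a1 then m a1 + m a2 else m (val b)].

(* m + eps_b - eps_c (used when m(c) > 0 and b != c) *)
Definition shift (A : finType) (m : {ffun A -> nat}) (b c : A) : {ffun A -> nat} :=
  [ffun a => m a + (a == b) - (a == c)]%N.

(* pi : F -> F', t_{e i} |-> t_{e' (pv i)} where e' (pv i) = pi (e i) *)
Definition piF (K : comNzRingType) (n n' : nat) (pv : 'I_n -> 'I_n') (p : {mpoly K[n]})
  : {mpoly K[n']} :=
  p \mPo [tuple 'X_(pv i) | i < n].

Arguments xmon {A} K m.
Arguments phi {A} K {n} e p.
Arguments piF {K n n'} pv p.

(* Main.v *)
Require Import Defs.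
From HB Require Import structures.
From mathcomp Require Import all_boot all_order all_algebra.
From mathcomp Require Import reals.
From mathcomp.real_closed Require Import complex.
From mathcomp Require Import mpoly zify.
From Stdlib Require Import ClassicalEpsilon.
Import Order.TTheory GRing.Theory Num.Theory.
Local Open Scope ring_scope.

Section Comb.
Variables (V A : finType) (src tgt : A -> V) (theta : V -> int) (a1 a2 : A).
Hypotheses (hne : a1 != a2) (hsrc : src a1 = src a2) (htgt : tgt a1 = tgt a2).

Local Notation A' := (arrQ' a2).

Lemma sum_sub (G : A -> nat) (P : pred A) :
  (\sum_(b : A' | P (val b)) G (val b) = \sum_(a | (a != a2) && P a) G a)%N.
Proof.
rewrite (reindex_omap (val : A' -> A) insub); last first.
  by move=> i /andP[iA Pi]; rewrite insubT.
by apply: eq_bigl=> -[i iA]/=; rewrite insubT ?iA /= eqxx andbT.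
Qed.

Lemma sum_piv (f : A -> bool) (hf : f a1 = f a2) (m : {ffun A -> nat}) :
  (\sum_(a | f a) m a = \sum_(b : A' | f (val b)) piv a1 a2 m b)%N.
Proof.
have -> : (\sum_(b : A' | f (val b)) piv a1 a2 m b =
    \sum_(b : A' | f (val b)) (m (val b) + (val b == a1) * m a2))%N.
  apply: eq_bigr => b _; rewrite ffunE; case: eqP => [->|_]; lia.
rewrite big_split /= sum_sub (sum_sub (fun a => (a == a1) * m a2)%N).
have hne' : a1 != a2 by [].
case hf2: (f a2).
  rewrite (bigD1 a2) //= [X in (_ = _ + X)%N](bigD1 a1) /=; last by rewrite hne hf hf2.
  rewrite eqxx [X in (_ = _ + (_ + X))%N]big1; last by move=> a /andP[_ /negbTE ->].
  rewrite addn0 mul1n addnC; congr (_ + _)%N; by apply: eq_bigl => a; rewrite andbC.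
rewrite [X in (_ = _ + X)%N]big1 ?addn0; last first.
  by move=> a /andP[_ fa]; case: eqP fa => [->|]; rewrite ?hf ?hf2.
by apply: eq_bigl => a; case: (eqVneq a a2) => [->|]; rewrite ?hf2.
Qed.

Lemma sumz (I : finType) (P : pred I) (m : I -> nat) :
  \sum_(a | P a) (m a)%:Z = (\sum_(a | P a) m a)%N%:Z.
Proof. by rewrite -natz natr_sum; apply: eq_bigr => a _; rewrite natz. Qed.

Lemma in_nabla_piv (m : {ffun A -> nat}) :
  in_nabla src tgt theta m <-> in_nabla (fun b : A' => src (val b)) (fun b : A' => tgt (val b)) theta (piv a1 a2 m).
Proof.
rewrite /in_nabla; split=> h v; rewrite h !sumz.
  rewrite (sum_piv (fun a => tgt a == v)) ?htgt //.
  by rewrite (sum_piv (fun a => src a == v)) ?hsrc //.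
rewrite (sum_piv (fun a => tgt a == v)) ?htgt //.
by rewrite (sum_piv (fun a => src a == v)) ?hsrc //.
Qed.

Lemma piv_shift21 (m : {ffun A -> nat}) : (0 < m a1)%N ->
  piv a1 a2 (shift m a2 a1) = piv a1 a2 m.
Proof.
move=> hm; apply/ffunP => b; rewrite !ffunE.
have h21 : (a2 == a1) = false by rewrite eq_sym (negbTE hne).
case: b => b hb /=; rewrite (negbTE hne) h21 eqxx (negbTE hb).
case: ifP => hb1; rewrite ?eqxx ?hb1; lia.
Qed.

Lemma piv_shift12 (m : {ffun A -> nat}) : (0 < m a2)%N ->
  piv a1 a2 (shift m a1 a2) = piv a1 a2 m.
Proof.
move=> hm; apply/ffunP => b; rewrite !ffunE.
have h21 : (a2 == a1) = false by rewrite eq_sym (negbTE hne).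
case: b => b hb /=; rewrite (negbTE hne) h21 eqxx (negbTE hb).
case: ifP => hb1; rewrite ?eqxx ?hb1; lia.
Qed.

End Comb.


Section Ideal.
Variable (R : comNzRingType) (G : R -> Prop).

Lemma ideal0 : in_ideal G 0.
Proof. by exists 0%N, (fun _ => 0), (fun _ => 0); split => [[]|]; rewrite ?big_ord0. Qed.

Lemma idealG g : G g -> in_ideal G g.
Proof.
move=> hg; exists 1%N, (fun _ => 1), (fun _ => g); split => //.
by rewrite big_ord1 mul1r.
Qed.

Lemma idealD p q : in_ideal G p -> in_ideal G q -> in_ideal G (p + q).
Proof.
move=> [k1 [c1 [g1 [h1 ->]]]] [k2 [c2 [g2 [h2 ->]]]].
exists (k1 + k2)%N, (fun j => match split j with inl a => c1 a | inr b => c2 b end),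
  (fun j => match split j with inl a => g1 a | inr b => g2 b end); split.
  by move=> j; case: (split j).
rewrite big_split_ord; congr (_ + _); apply: eq_bigr => i _.
  by have := unsplitK (inl _ i) => /= ->.
by have := unsplitK (inr _ i) => /= ->.
Qed.

Lemma idealM q p : in_ideal G p -> in_ideal G (q * p).
Proof.
move=> [k [c [g [h ->]]]]; exists k, (fun j => q * c j), g; split => //.
by rewrite mulr_sumr; apply: eq_bigr => j _; rewrite mulrA.
Qed.

Lemma idealN p : in_ideal G p -> in_ideal G (- p).
Proof. by move=> h; rewrite -mulN1r; apply: idealM. Qed.

Lemma idealB p q : in_ideal G p -> in_ideal G q -> in_ideal G (p - q).
Proof. by move=> hp hq; apply: idealD => //; apply: idealN. Qed.

Lemma ideal_sum (I : Type) (r : seq I) (F : I -> R) :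
  (forall i, in_ideal G (F i)) -> in_ideal G (\sum_(i <- r) F i).
Proof.
move=> h; elim: r => [|x r IH]; first by rewrite big_nil; apply: ideal0.
by rewrite big_cons; apply: idealD.
Qed.

End Ideal.

Section PolyBasic.
Variable (K : comNzRingType).

Lemma mpolyX_inj k (m m' : 'X_{1..k}) : 'X_[m] = 'X_[m'] :> {mpoly K[k]} -> m = m'.
Proof.
move=> h; have := congr1 (mcoeff m) h; rewrite !mcoeffX eqxx.
by case: eqP => // _ /eqP; rewrite oner_eq0.
Qed.

Definition mx (A : finType) (m : {ffun A -> nat}) : 'X_{1..#|A|} :=
  [multinom m (enum_val j) | j < #|A|].
Local Arguments mx {A} m.

Lemma mx_inj (A : finType) : injective (@mx A).
Proof.
move=> m m' /mnmP h; apply/ffunP => a.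
by have := h (enum_rank a); rewrite !mnmE enum_rankK.
Qed.

Lemma xmonE (A : finType) (m : {ffun A -> nat}) : xmon K m = 'X_[mx m].
Proof.
rewrite /xmon (eq_bigr (fun a => 'X_[U_(enum_rank a)] ^+ m a)) // mprodXnE.
congr 'X_[_]; apply/mnmP => j; rewrite mnm_sumE mnmE.
rewrite (bigD1 (enum_val j)) //= mulmnE mnm1E enum_valK eqxx mul1n big1 ?addn0 //.
move=> a ha; rewrite mulmnE mnm1E.
case: eqP => // hj; rewrite -hj enum_rankK eqxx in ha; done.
Qed.

Lemma xmon_inj (A : finType) (m m' : {ffun A -> nat}) : xmon K m = xmon K m' -> m = m'.
Proof. by rewrite !xmonE => /mpolyX_inj /mx_inj. Qed.

Lemma phi_X (A : finType) k (e0 : 'I_k -> {ffun A -> nat}) (P : 'X_{1..k}) :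
  phi K e0 'X_[P] = xmon K [ffun a => \sum_(i < k) P i * e0 i a]%N.
Proof.
rewrite /phi comp_mpolyX (eq_bigr (fun i => 'X_[mx (e0 i)] ^+ P i)); last first.
  by move=> i _; rewrite tnth_mktuple xmonE.
rewrite mprodXnE xmonE; congr 'X_[_]; apply/mnmP => j.
rewrite mnm_sumE mnmE ffunE; apply: eq_bigr => i _; rewrite mulmnE mnmE mulnC.
done.
Qed.

Lemma piF_X k k' (pv : 'I_k -> 'I_k') (P : 'X_{1..k}) :
  piF (K:=K) pv 'X_[P] =
  'X_[[multinom (\sum_(i < k | pv i == j) P i)%N | j < k']].
Proof.
rewrite /piF comp_mpolyX (eq_bigr (fun i => 'X_[U_(pv i)] ^+ P i)); last first.
  by move=> i _; rewrite tnth_mktuple.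
rewrite mprodXnE; congr 'X_[_]; apply/mnmP => j.
rewrite mnm_sumE mnmE [RHS]big_mkcond /=; apply: eq_bigr => i _.
by rewrite mulmnE mnm1E; case: eqP => _; rewrite ?mul1n ?mul0n.
Qed.

Lemma xmonD (A : finType) (m m' : {ffun A -> nat}) :
  xmon K m * xmon K m' = xmon K [ffun a => m a + m' a]%N.
Proof.
rewrite !xmonE -mpolyXD; congr 'X_[_]; apply/mnmP => j.
by rewrite mnmDE !mnmE ffunE.
Qed.

End PolyBasic.
Arguments mx {A} m.

Section Main.
Variables (K : comNzRingType).
Variables (V A : finType) (src tgt : A -> V) (theta : V -> int) (a1 a2 : A).
Hypotheses (hne : a1 != a2) (hsrc : src a1 = src a2) (htgt : tgt a1 = tgt a2).
Local Notation A' := (arrQ' a2).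
Variables (n : nat) (e : 'I_n -> {ffun A -> nat}).
Hypothesis (he : enumerates src tgt theta e).
Variables (n' : nat) (e' : 'I_n' -> {ffun A' -> nat}).
Hypothesis (he' : enumerates (fun b : A' => src (val b)) (fun b : A' => tgt (val b)) theta e').
Variables (pv : 'I_n -> 'I_n').
Hypothesis (hpv : forall i, e' (pv i) = piv a1 a2 (e i)).
Variables (Lambda : Type) (uL vL : Lambda -> {mpoly K[n']}).
Hypotheses (hu : forall l, is_monomial (uL l)) (hv : forall l, is_monomial (vL l)).
Hypothesis (hgen : generates_kernel (fun p => exists l, p = uL l - vL l) (phi K e')).
Variable (psi : {ffun A -> nat} -> {mpoly K[n']} -> {mpoly K[n]}).
Hypothesis (hpsi : forall (s : {ffun A -> nat}) (w : {mpoly K[n']}),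
      is_monomial w -> in_S src tgt theta s ->
      xmon K (piv a1 a2 s) = phi K e' w ->
      [/\ is_monomial (psi s w), piF pv (psi s w) = w & phi K e (psi s w) = xmon K s]).

Definition sig (P : 'X_{1..n}) : {ffun A -> nat} := [ffun a => \sum_(i < n) P i * e i a]%N.
Definition sig' (M : 'X_{1..n'}) : {ffun A' -> nat} :=
  [ffun b => \sum_(j < n') M j * e' j b]%N.
Definition pim (P : 'X_{1..n}) : 'X_{1..n'} :=
  [multinom (\sum_(i < n | pv i == j) P i)%N | j < n'].

Lemma sum_U (k : nat) (i : 'I_k) (f : 'I_k -> nat) :
  (\sum_(i0 < k) U_(i)%MM i0 * f i0 = f i)%N.
Proof.
rewrite (bigD1 i) //= mnm1E eqxx mul1n big1 ?addn0 // => j /negbTE hj.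
by rewrite mnm1E eq_sym hj.
Qed.

Lemma sigD P Q a : sig (P + Q)%MM a = (sig P a + sig Q a)%N.
Proof. by rewrite !ffunE -big_split; apply: eq_bigr => i _; rewrite mnmDE mulnDl. Qed.

Lemma sigU i a : sig U_(i)%MM a = e i a.
Proof. by rewrite ffunE sum_U. Qed.

Lemma sig0 a : sig 0%MM a = 0%N.
Proof. by rewrite ffunE big1 // => i _; rewrite mnm0E. Qed.

Lemma sig'D P Q a : sig' (P + Q)%MM a = (sig' P a + sig' Q a)%N.
Proof. by rewrite !ffunE -big_split; apply: eq_bigr => i _; rewrite mnmDE mulnDl. Qed.

Lemma sig'U i a : sig' U_(i)%MM a = e' i a.
Proof. by rewrite ffunE sum_U. Qed.

Lemma sig'0 a : sig' 0%MM a = 0%N.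
Proof. by rewrite ffunE big1 // => i _; rewrite mnm0E. Qed.

Lemma pimD P Q : pim (P + Q)%MM = (pim P + pim Q)%MM.
Proof. by apply/mnmP => j; rewrite mnmDE !mnmE -big_split; apply: eq_bigr => i _; rewrite mnmDE. Qed.

Lemma pimU i : pim U_(i)%MM = U_(pv i)%MM.
Proof.
apply/mnmP => j; rewrite mnmE mnm1E.
case: (eqVneq (pv i) j) => [<-|hj].
  by rewrite (bigD1 i) //= mnm1E eqxx big1 // => k /andP[_ /negbTE]; rewrite mnm1E eq_sym => ->.
by rewrite big1 // => k /eqP hk; rewrite mnm1E; case: eqP => // ek; rewrite ek hk eqxx in hj.
Qed.

Lemma pim0 : pim 0%MM = 0%MM.
Proof. by apply/mnmP => j; rewrite mnmE mnm0E big1 // => i _; rewrite mnm0E. Qed.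

Lemma mdeg_pim P : mdeg (pim P) = mdeg P.
Proof.
rewrite !mdegE; under eq_bigr do rewrite mnmE.
by rewrite [RHS](partition_big pv xpredT).
Qed.

Lemma piv_sig P : piv a1 a2 (sig P) = sig' (pim P).
Proof.
apply/ffunP => b.
transitivity (\sum_(i < n) P i * e' (pv i) b)%N.
  under [RHS]eq_bigr do rewrite hpv ffunE.
  rewrite ffunE; case: ifP => _; rewrite !ffunE // -big_split.
  by apply: eq_bigr => i _; rewrite mulnDr.
rewrite [LHS](partition_big pv xpredT) //= ffunE; apply: eq_bigr => j _.
by rewrite mnmE big_distrl; apply: eq_bigr => i /eqP <-.
Qed.

Lemma e_nabla i : in_nabla src tgt theta (e i).
Proof. by apply/(proj2 he (e i)); exists i. Qed.

Lemma e'_nabla j : in_nabla (fun b : A' => src (val b)) (fun b : A' => tgt (val b)) theta (e' j).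
Proof. by apply/(proj2 he' (e' j)); exists j. Qed.

Lemma nabla_e m : in_nabla src tgt theta m -> exists i, e i = m.
Proof. by move/(proj2 he m). Qed.

Lemma pv_eq i k : piv a1 a2 (e i) = piv a1 a2 (e k) -> pv i = pv k.
Proof. by move=> h; apply: (proj1 he'); rewrite !hpv. Qed.

Lemma e_eq i k : pv i = pv k -> e i a1 = e k a1 -> i = k.
Proof.
move=> hp h1; apply: (proj1 he); apply/ffunP => a.
have hp' := congr1 e' hp; rewrite !hpv in hp'.
move/ffunP: hp' => hp'.
have h12 := hp' (exist _ a1 hne : A').
rewrite /= !ffunE /= eqxx in h12.
case: (eqVneq a a1) => [->//|ha1].
case: (eqVneq a a2) => [->|ha2]; first by lia.
have := hp' (exist _ a ha2 : A').
by rewrite /= !ffunE /= (negbTE ha1).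
Qed.

Lemma shift_idx21 i : (0 < e i a1)%N ->
  exists k, e k = shift (e i) a2 a1 /\ pv k = pv i.
Proof.
move=> h.
have hn : in_nabla src tgt theta (shift (e i) a2 a1).
  apply/(in_nabla_piv V A src tgt theta a1 a2 hne hsrc htgt _); rewrite piv_shift21 //.
  exact/(in_nabla_piv V A src tgt theta a1 a2 hne hsrc htgt _)/e_nabla.
have [k hk] := nabla_e _ hn; exists k; split => //.
by apply: pv_eq; rewrite hk piv_shift21.
Qed.

Lemma shift_idx12 i : (0 < e i a2)%N ->
  exists k, e k = shift (e i) a1 a2 /\ pv k = pv i.
Proof.
move=> h.
have hn : in_nabla src tgt theta (shift (e i) a1 a2).
  apply/(in_nabla_piv V A src tgt theta a1 a2 hne hsrc htgt _); rewrite piv_shift12 //.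
  exact/(in_nabla_piv V A src tgt theta a1 a2 hne hsrc htgt _)/e_nabla.
have [k hk] := nabla_e _ hn; exists k; split => //.
by apply: pv_eq; rewrite hk piv_shift12.
Qed.

Lemma pos_pim (P : 'X_{1..n}) j : (0 < pim P j)%N -> exists i, (0 < P i)%N /\ pv i = j.
Proof.
case: (pickP (fun i => (pv i == j) && (0 < P i)%N)) => [i /andP[/eqP hj hi] _|h].
  by exists i.
rewrite mnmE big1 // => i hi; move: (h i); rewrite hi /=; lia.
Qed.

Lemma pos_mdeg k (P : 'X_{1..k}) : (0 < mdeg P)%N -> exists i, (0 < P i)%N.
Proof.
case: (pickP (fun i => (0 < P i)%N)) => [i hi _|h]; first by exists i.
rewrite mdegE big1 // => i _; move: (h i); lia.
Qed.

Lemma le_sig (P : 'X_{1..n}) i a : (0 < P i)%N -> (e i a <= sig P a)%N.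
Proof.
move=> h; rewrite ffunE (bigD1 i) //=; apply: leq_trans (leq_addr _ _).
by rewrite leq_pmull.
Qed.

Lemma le_sig' (M : 'X_{1..n'}) j b : (0 < M j)%N -> (e' j b <= sig' M b)%N.
Proof.
move=> h; rewrite ffunE (bigD1 j) //=; apply: leq_trans (leq_addr _ _).
by rewrite leq_pmull.
Qed.

Lemma sig_sub (P Q : 'X_{1..n}) a : (Q <= P)%MM -> sig (P - Q)%MM a = (sig P a - sig Q a)%N.
Proof.
move=> h; have := sigD (P - Q)%MM Q a; rewrite submK // => ->; lia.
Qed.

Lemma sig_nabla (P : 'X_{1..n}) : in_nabla src tgt (fun v => (mdeg P)%:Z * theta v) (sig P).
Proof.
move=> v; rewrite mdegE -natz natr_sum big_distrl /=.
have hs (f : A -> bool) : \sum_(a | f a) (sig P a)%:Z =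
    \sum_(i < n) (P i)%:Z * \sum_(a | f a) (e i a)%:Z.
  under [RHS]eq_bigr do rewrite big_distrr.
  rewrite [RHS]exchange_big /=; apply: eq_bigr => a _; rewrite ffunE -natz natr_sum.
  by apply: eq_bigr => i _; rewrite natrM !natz.
  rewrite hs hs -sumrB; apply: eq_bigr => i _; rewrite -mulrBr -(e_nabla i v).
  by rewrite natz.
Qed.

Lemma mnm_subU k (M : 'X_{1..k}) j : (0 < M j)%N -> M = (M - U_(j) + U_(j))%MM.
Proof. by move=> h; rewrite submK // lep1mP; lia. Qed.

Lemma sig'_sub (P Q : 'X_{1..n'}) a : (Q <= P)%MM -> sig' (P - Q)%MM a = (sig' P a - sig' Q a)%N.
Proof.
move=> h; have := sig'D (P - Q)%MM Q a; rewrite submK // => ->; lia.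
Qed.

Lemma decomp (P : 'X_{1..n}) (M1 M2 : 'X_{1..n'}) : pim P = (M1 + M2)%MM ->
  exists P1 P2, P = (P1 + P2)%MM /\ pim P1 = M1 /\ pim P2 = M2.
Proof.
have [d hd] : exists d, mdeg M1 = d by exists (mdeg M1).
elim: d P M1 hd => [|d IH] P M1 hd h.
  move/eqP: hd; rewrite mdeg_eq0 => /eqP hM1; subst M1.
  by exists 0%MM, P; rewrite add0m pim0; move: h; rewrite add0m.
have [j hj] : exists j, (0 < M1 j)%N by apply: pos_mdeg; rewrite hd.
have hpj : (0 < pim P j)%N by rewrite h mnmDE; lia.
have [i [hi hpi]] := pos_pim _ _ hpj.
have hP := mnm_subU _ _ _ hi; have hM1 := mnm_subU _ _ _ hj.
have h' : pim (P - U_(i))%MM = (M1 - U_(j) + M2)%MM.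
  apply: (@addIm _ U_(j)%MM); rewrite -{1}hpi -pimU -pimD -hP h.
  by rewrite -addmA [(M2 + _)%MM]addmC addmA -hM1.
have hd' : mdeg (M1 - U_(j))%MM = d.
  by move: hd; rewrite {1}hM1 mdegD mdeg1 addn1 => -[].
have [P1 [P2 [e1 [e2 e3]]]] := IH _ _ hd' h'.
exists (P1 + U_(i))%MM, P2; split; last split => //.
  by rewrite hP e1 -addmA [(P2 + _)%MM]addmC addmA.
by rewrite pimD e2 pimU hpi -hM1.
Qed.

Lemma lift (M : 'X_{1..n'}) (s : {ffun A -> nat}) : piv a1 a2 s = sig' M ->
  exists P, pim P = M /\ sig P = s.
Proof.
have [d hd] : exists d, mdeg M = d by exists (mdeg M).
have h21 : (a2 == a1) = false by rewrite eq_sym (negbTE hne).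
elim: d M s hd => [|d IH] M s hd h.
  move/eqP: hd; rewrite mdeg_eq0 => /eqP hM; subst M.
  exists 0%MM; split; first exact: pim0.
  move/ffunP: h => h.
  apply/ffunP => a; rewrite sig0.
  have := h (exist _ a1 hne); rewrite sig'0 ffunE /= eqxx => h1.
  case: (eqVneq a a2) => [->|ha2]; first by lia.
  case: (eqVneq a a1) => [->|ha1]; first by lia.
  by have := h (exist _ a ha2); rewrite sig'0 ffunE /= (negbTE ha1).
have [j hj] : exists j, (0 < M j)%N by apply: pos_mdeg; rewrite hd.
move/ffunP: (h) => hpt.
pose al : A' := exist _ a1 hne.
pose c := e' j al.
pose g (a : A) := match insub a with Some b => e' j b | None => 0%N end.
have gE (b : A') : g (val b) = e' j b by rewrite /g valK.
pose t : {ffun A -> nat} := [ffun a => if a == a1 then minn c (s a1)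
   else if a == a2 then (c - minn c (s a1))%N else g a].
have hc : (c <= s a1 + s a2)%N.
  have := le_sig' _ _ al hj; rewrite -hpt ffunE /= eqxx //.
have hts (a : A) : (t a <= s a)%N.
  rewrite ffunE; case: (eqVneq a a1) => [->|ha1]; first by lia.
  case: (eqVneq a a2) => [->|ha2]; first by lia.
  have := le_sig' _ _ (exist _ a ha2) hj; rewrite -hpt ffunE /= (negbTE ha1).
  by rewrite -(gE (exist _ a ha2)).
have hpt' : piv a1 a2 t = e' j.
  apply/ffunP => -[b hb]; rewrite !ffunE /=.
  case: (eqVneq b a1) => [eb|hb1].
    subst b; rewrite eqxx h21.
    have -> : exist _ a1 hb = al by apply: val_inj.
    rewrite eqxx /c natrDE. move: (e' j al) (s a1) => x y; lia.
  by rewrite (negbTE hb) (gE (exist _ b hb)).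
have hn : in_nabla src tgt theta t.
  apply/(in_nabla_piv V A src tgt theta a1 a2 hne hsrc htgt _); rewrite hpt'.
  exact: e'_nabla.
have [i hi] := nabla_e _ hn.
have hpi : pv i = j by apply: (proj1 he'); rewrite hpv hi.
pose s1 : {ffun A -> nat} := [ffun a => s a - t a]%N.
have hM := mnm_subU _ _ _ hj.
have hd' : mdeg (M - U_(j))%MM = d.
  by move: hd; rewrite {1}hM mdegD mdeg1 addn1 => -[].
have h1 : piv a1 a2 s1 = sig' (M - U_(j))%MM.
  apply/ffunP => b; rewrite sig'_sub ?lep1mP; last by lia.
  rewrite sig'U -hpt -hpt' /piv !ffunE.
  have hb2 := valP b.
  case: ifP => hb1; rewrite ?hb1 ?(negbTE hb2) ?eqxx ?h21 ?(negbTE hne) //.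
  rewrite natrDE; move: hc; rewrite /c; move: (s a1) (s a2) (e' j al) => x1 x2 y; lia.
have [P0 [hP0 hP0s]] := IH _ _ hd' h1.
exists (P0 + U_(i))%MM; split.
  by rewrite pimD pimU hP0 hpi -hM.
apply/ffunP => a; rewrite sigD sigU hi hP0s ffunE.
by have := hts a; lia.
Qed.



Definition Gset (p : {mpoly K[n]}) : Prop :=
       (exists (l : Lambda) (s : {ffun A -> nat}),
          [/\ in_S src tgt theta s, xmon K (piv a1 a2 s) = phi K e' (uL l)
            & p = psi s (uL l) - psi s (vL l)])
       \/
       (exists i j k l : 'I_n,
          [/\ (0 < e i a1)%N, (0 < e j a2)%N,
              e k = shift (e i) a2 a1, e l = shift (e j) a1 a2
            & p = 'X_i * 'X_j - 'X_k * 'X_l]).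

Definition Conn (P Q : 'X_{1..n}) := in_ideal Gset ('X_[P] - 'X_[Q]).

Lemma conn_refl P : Conn P P.
Proof. by rewrite /Conn subrr; apply: ideal0. Qed.

Lemma conn_sym P Q : Conn P Q -> Conn Q P.
Proof. by move=> h; rewrite /Conn -opprB; apply: idealN. Qed.

Lemma conn_trans P Q S : Conn P Q -> Conn Q S -> Conn P S.
Proof.
move=> h1 h2; rewrite /Conn.
have -> : 'X_[P] - 'X_[S] = ('X_[P] - 'X_[Q]) + ('X_[Q] - 'X_[S]) :> {mpoly K[n]}.
  by rewrite addrA subrK.
by apply: idealD.
Qed.

Lemma conn_add P Q W : Conn P Q -> Conn (W + P)%MM (W + Q)%MM.
Proof. by move=> h; rewrite /Conn !mpolyXD -mulrBr; apply: idealM. Qed.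

Arguments conn_trans {P Q S}.
Arguments conn_sym {P Q}.
Arguments conn_add {P Q} W.

Lemma phiX P : phi K e 'X_[P] = xmon K (sig P).
Proof. exact: phi_X. Qed.

Lemma phi'X M : phi K e' 'X_[M] = xmon K (sig' M).
Proof. exact: phi_X. Qed.

Lemma piFX P : piF (K:=K) pv 'X_[P] = 'X_[pim P].
Proof. exact: piF_X. Qed.

Lemma pos_sig (Q : 'X_{1..n}) a : (0 < sig Q a)%N -> exists k, (0 < Q k)%N /\ (0 < e k a)%N.
Proof.
case: (pickP (fun k => (0 < Q k)%N && (0 < e k a)%N)) => [k /andP[h1 h2] _|h].
  by exists k.
rewrite ffunE big1 // => k _; move: (h k); case: (Q k) => [|q] //=.
by case: (e k a) => //=; rewrite muln0.
Qed.

Lemma conn_move i k : (0 < e i a1)%N -> (0 < e k a2)%N ->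
  exists x y, [/\ pv x = pv i, pv y = pv k,
    (forall a, e x a + e y a = e i a + e k a)%N,
    (e x a1 = (e i a1).-1 /\ e y a1 = (e k a1).+1)%N
  & Conn (U_(i) + U_(k))%MM (U_(x) + U_(y))%MM].
Proof.
move=> h1 h2.
have [x [hx hpx]] := shift_idx21 i h1; have [y [hy hpy]] := shift_idx12 k h2.
have h21 : (a2 == a1) = false by rewrite eq_sym (negbTE hne).
exists x, y; split => //.
- move=> a; rewrite hx hy !ffunE.
  case: (eqVneq a a1) => [->|ha1]; rewrite ?eqxx ?(negbTE hne) //=.
    by move: h1; move: (e i a1) (e k a1) => p q; lia.
  case: (eqVneq a a2) => [->|ha2]; rewrite ?eqxx ?h21 //=.
    by move: h2; move: (e i a2) (e k a2) => p q; lia.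
  by rewrite !addn0 !subn0.
- rewrite hx hy !ffunE eqxx (negbTE hne) /=; split; lia.
rewrite /Conn !mpolyXD; apply: idealG; right; exists i, k, x, y; split => //.
Qed.

Lemma decomp2 (P : 'X_{1..n}) i k : (0 < P i)%N -> (0 < (P - U_(i))%MM k)%N ->
  P = ((P - U_(i) - U_(k)) + (U_(i) + U_(k)))%MM.
Proof.
move=> h1 h2; rewrite [(U_(i) + U_(k))%MM]addmC addmA -(mnm_subU _ _ _ h2).
exact: mnm_subU.
Qed.

Lemma swap_step (P : 'X_{1..n}) i k x y : (0 < P i)%N -> (0 < (P - U_(i))%MM k)%N ->
  pv x = pv i -> pv y = pv k -> (forall a, e x a + e y a = e i a + e k a)%N ->
  Conn (U_(i) + U_(k))%MM (U_(x) + U_(y))%MM ->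
  [/\ Conn P ((P - U_(i) - U_(k)) + (U_(x) + U_(y)))%MM,
      pim ((P - U_(i) - U_(k)) + (U_(x) + U_(y)))%MM = pim P,
      sig ((P - U_(i) - U_(k)) + (U_(x) + U_(y)))%MM = sig P,
      mdeg ((P - U_(i) - U_(k)) + (U_(x) + U_(y)))%MM = mdeg P
    & (0 < ((P - U_(i) - U_(k)) + (U_(x) + U_(y)))%MM x)%N].
Proof.
move=> h1 h2 hx hy hs hc.
have hP := decomp2 _ _ _ h1 h2.
set Q := (P - U_(i) - U_(k))%MM in hP *.
split.
- by rewrite {1}hP; apply: conn_add.
- by rewrite [in RHS]hP !pimD !pimU hx hy.
- apply/ffunP => a; rewrite [in RHS]hP !sigD !sigU.
  by have := hs a; lia.
- by rewrite [in RHS]hP !mdegD !mdeg1.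
by rewrite !mnmDE mnm1E eqxx; lia.
Qed.

Lemma e_sum12 i j : pv i = pv j -> (e i a1 + e i a2 = e j a1 + e j a2)%N.
Proof.
move=> h; have := congr1 e' h; rewrite !hpv => /ffunP /(_ (exist _ a1 hne)).
by rewrite !ffunE /= eqxx !natrDE.
Qed.

Lemma conn_same d : forall P P' : 'X_{1..n}, mdeg P = d -> pim P = pim P' -> sig P = sig P' ->
  Conn P P'.
Proof.
elim: d => [|d IH] P P' hd hpim hsig.
  have hP : P = 0%MM by apply/eqP; rewrite -mdeg_eq0 hd.
  have hP' : P' = 0%MM by apply/eqP; rewrite -mdeg_eq0 -mdeg_pim -hpim mdeg_pim hd.
  by rewrite hP hP'; apply: conn_refl.
have hd' : (0 < mdeg P')%N by rewrite -mdeg_pim -hpim mdeg_pim hd.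
have [i' hi'] := pos_mdeg _ _ hd'.
have Hfin : forall Q, mdeg Q = d.+1 -> pim Q = pim P' -> sig Q = sig P' ->
    (0 < Q i')%N -> Conn Q P'.
  move=> Q hQd hQp hQs hj.
  have hQ := mnm_subU _ _ _ hj; have hP' := mnm_subU _ _ _ hi'.
  rewrite hQ hP' [(_ + U_(i'))%MM]addmC [X in Conn _ X]addmC; apply: conn_add.
  apply: IH.
  - by move: hQd; rewrite {1}hQ mdegD mdeg1 addn1 => -[].
  - apply: (@addIm _ U_(pv i')%MM); rewrite -pimU -!pimD -hQ -hP'; exact: hQp.
  - apply/ffunP => a; have := sigD (Q - U_(i'))%MM U_(i')%MM a.
    have := sigD (P' - U_(i'))%MM U_(i')%MM a.
    rewrite -hQ -hP' hQs sigU; lia.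
have Hclaim : forall N Q j, mdeg Q = d.+1 -> pim Q = pim P' -> sig Q = sig P' ->
    (0 < Q j)%N -> pv j = pv i' ->
    ((e j a1 - e i' a1) + (e i' a1 - e j a1) <= N)%N -> Conn Q P'.
  elim=> [|N IHN] Q j hQd hQp hQs hj hpj hN.
    have ej : j = i' by apply: e_eq => //; lia.
    by subst j; apply: Hfin.
  have hs := e_sum12 _ _ hpj.
  case: (ltngtP (e j a1) (e i' a1)) => hlt.
  - (* need to increase e j a1 *)
    have hpos : (0 < sig (Q - U_(j))%MM a1)%N.
      rewrite sig_sub ?lep1mP; last by lia.
      rewrite hQs sigU; have := le_sig P' i' a1 hi'; lia.
    have [k [hk1 hk2]] := pos_sig _ _ hpos.
    have hj2 : (0 < e j a2)%N by lia.
    have [x [y [hx hy hsum [hxa hya] hc]]] := conn_move k j hk2 hj2.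
    have hc' : Conn (U_(j) + U_(k))%MM (U_(y) + U_(x))%MM.
      by rewrite addmC [(U_(y) + _)%MM]addmC.
    have [c1 c2 c3 c4 c5] := swap_step Q j k y x hj hk1 hy hx
       (fun a => etrans (addnC _ _) (etrans (hsum a) (addnC _ _))) hc'.
    apply: conn_trans c1 _.
    apply: (IHN _ y); rewrite ?c4 ?c2 ?c3 //; first by rewrite hy.
    rewrite hya; lia.
  - (* need to decrease e j a1 *)
    have hpos : (0 < sig (Q - U_(j))%MM a2)%N.
      rewrite sig_sub ?lep1mP; last by lia.
      rewrite hQs sigU; have := le_sig P' i' a2 hi'; lia.
    have [k [hk1 hk2]] := pos_sig _ _ hpos.
    have hj1 : (0 < e j a1)%N by lia.
    have [x [y [hx hy hsum [hxa hya] hc]]] := conn_move j k hj1 hk2.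
    have [c1 c2 c3 c4 c5] := swap_step Q j k x y hj hk1 hx hy hsum hc.
    apply: conn_trans c1 _.
    apply: (IHN _ x); rewrite ?c4 ?c2 ?c3 //; first by rewrite hx.
    rewrite hxa; lia.
  have ej : j = i' by apply: e_eq.
  by subst j; apply: Hfin.
have : (0 < pim P (pv i'))%N.
  by rewrite hpim mnmE (bigD1 i') //=; lia.
case/pos_pim => i [hi hpi].
exact: (Hclaim _ P i hd hpim hsig hi hpi (leqnn _)).
Qed.

Lemma phiB (A0 : finType) k (e0 : 'I_k -> {ffun A0 -> nat}) p q :
  phi K e0 (p - q) = phi K e0 p - phi K e0 q.
Proof. by rewrite /phi rmorphB. Qed.

Lemma phiM (A0 : finType) k (e0 : 'I_k -> {ffun A0 -> nat}) p q :
  phi K e0 (p * q) = phi K e0 p * phi K e0 q.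
Proof. by rewrite /phi rmorphM. Qed.

Lemma phiZ (A0 : finType) k (e0 : 'I_k -> {ffun A0 -> nat}) c p :
  phi K e0 (c *: p) = c *: phi K e0 p.
Proof. by rewrite /phi comp_mpolyZ. Qed.

Lemma phi_sum (A0 : finType) k (e0 : 'I_k -> {ffun A0 -> nat}) (I : Type) (r : seq I)
  (P : pred I) (F : I -> {mpoly K[k]}) :
  phi K e0 (\sum_(i <- r | P i) F i) = \sum_(i <- r | P i) phi K e0 (F i).
Proof. by rewrite /phi rmorph_sum. Qed.

Lemma phi'_uv l : phi K e' (uL l) = phi K e' (vL l).
Proof.
have : phi K e' (uL l - vL l) = 0 by apply/hgen; apply: idealG; exists l.
by rewrite phiB => /eqP; rewrite subr_eq0 => /eqP.
Qed.

Definition Eqr (M M' : 'X_{1..n'}) : Prop :=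
  sig' M = sig' M' /\
  forall P P', pim P = M -> pim P' = M' -> sig P = sig P' -> Conn P P'.

Lemma Eqr_refl M : Eqr M M.
Proof.
split => // P P' h1 h2 hs; apply: (conn_same (mdeg P)) => //; congruence.
Qed.

Lemma Eqr_sym M M' : Eqr M M' -> Eqr M' M.
Proof.
move=> [h H]; split => // P P' h1 h2 hs; apply: conn_sym; apply: H => //.
Qed.

Lemma Eqr_trans M M' M'' : Eqr M M' -> Eqr M' M'' -> Eqr M M''.
Proof.
move=> [h1 H1] [h2 H2]; split; first congruence.
move=> P P'' hP hP'' hs.
have [P' [hp' hs']] : exists P', pim P' = M' /\ sig P' = sig P.
  by apply: lift; rewrite piv_sig hP h1.
apply: (conn_trans (H1 P P' hP hp' (esym hs'))).
by apply: H2 => //; rewrite hs'.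
Qed.

Lemma Eqr_step l (w U W : 'X_{1..n'}) : uL l = 'X_[U] -> vL l = 'X_[W] ->
  Eqr (w + U)%MM (w + W)%MM.
Proof.
move=> hU hW.
have hUW : sig' U = sig' W.
  by apply: (xmon_inj K); rewrite -!phi'X -hU -hW; exact: phi'_uv.
split; first by apply/ffunP => b; rewrite !sig'D hUW.
move=> P P'' hP hP'' hs.
have [Pw [PU [hPd [hPw hPU]]]] := decomp P w U hP.
pose s' := sig PU.
have hS : in_S src tgt theta s' by exists (mdeg PU); exact: sig_nabla.
have hxu : xmon K (piv a1 a2 s') = phi K e' (uL l) by rewrite /s' piv_sig hPU hU phi'X.
have hxv : xmon K (piv a1 a2 s') = phi K e' (vL l) by rewrite hxu phi'_uv.
have [[QU hQU] hpu hphu] := hpsi _ _ (hu l) hS hxu.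
have [[QV hQV] hpv' hphv] := hpsi _ _ (hv l) hS hxv.
rewrite hQU piFX hU in hpu; move/mpolyX_inj: hpu => hpu.
rewrite hQU phiX in hphu; move/(xmon_inj K): hphu => hsu.
rewrite hQV piFX hW in hpv'; move/mpolyX_inj: hpv' => hpv'.
rewrite hQV phiX in hphv; move/(xmon_inj K): hphv => hsv.
have c1 : Conn P (Pw + QU)%MM.
  by rewrite hPd; apply: conn_add; apply: (conn_same (mdeg PU)) => //; congruence.
have c2 : Conn (Pw + QU)%MM (Pw + QV)%MM.
  apply: conn_add; apply: idealG; left; exists l, s'; split => //.
  by rewrite hQU hQV.
apply: (conn_trans c1); apply: (conn_trans c2).
apply: (conn_same (mdeg (Pw + QV)%MM)) => //.
  by rewrite pimD hPw hpv' hP''.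
by apply/ffunP => a; rewrite -hs hPd !sigD hsv.
Qed.

Definition Eqb (M M' : 'X_{1..n'}) : bool :=
  if excluded_middle_informative (Eqr M M') then true else false.

Lemma EqbP M M' : reflect (Eqr M M') (Eqb M M').
Proof. by rewrite /Eqb; case: excluded_middle_informative => h; constructor. Qed.

Definition chi (M0 : 'X_{1..n'}) (f : {mpoly K[n']}) : K :=
  \sum_(mm <- msupp f) (if Eqb mm M0 then f@_mm else 0).

Lemma chi_gen M0 f (s : seq 'X_{1..n'}) : uniq s -> {subset msupp f <= s} ->
  chi M0 f = \sum_(mm <- s) (if Eqb mm M0 then f@_mm else 0).
Proof.
move=> hs hsub.
rewrite (bigID (fun mm => mm \in msupp f)) /= [X in _ = _ + X]big1 ?addr0; last first.
  by move=> mm hm; move: hm; rewrite -mcoeff_eq0 => /eqP ->; case: ifP.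
rewrite -big_filter; apply: perm_big; apply: uniq_perm.
- exact: msupp_uniq.
- exact: filter_uniq.
move=> x; rewrite mem_filter; case hx: (x \in msupp f) => //=.
by rewrite (hsub x hx).
Qed.

Lemma chiD M0 f g : chi M0 (f + g) = chi M0 f + chi M0 g.
Proof.
pose s := undup (msupp f ++ msupp g).
have us : uniq s by apply: undup_uniq.
rewrite (chi_gen M0 (f + g) s us); last first.
  by move=> x /msuppD_le; rewrite mem_undup.
rewrite (chi_gen M0 f s us); last by move=> x hx; rewrite mem_undup mem_cat hx.
rewrite (chi_gen M0 g s us); last by move=> x hx; rewrite mem_undup mem_cat hx orbT.
rewrite -big_split; apply: eq_bigr => mm _; rewrite mcoeffD.
by case: (Eqb mm M0) => /=; rewrite ?addr0.
Qed.

Lemma chiZ M0 c f : chi M0 (c *: f) = c * chi M0 f.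
Proof.
rewrite (chi_gen M0 (c *: f) _ (msupp_uniq f)); last exact: msuppZ_le.
rewrite /chi mulr_sumr; apply: eq_bigr => mm _; rewrite mcoeffZ.
by case: ifP; rewrite ?mulr0.
Qed.

Lemma chiB M0 f g : chi M0 (f - g) = chi M0 f - chi M0 g.
Proof. by rewrite chiD -scaleN1r chiZ mulN1r. Qed.

Lemma chi0 M0 : chi M0 0 = 0.
Proof. by rewrite /chi msupp0 big_nil. Qed.

Lemma chi_sum M0 (I : Type) (r : seq I) (F : I -> {mpoly K[n']}) :
  chi M0 (\sum_(i <- r) F i) = \sum_(i <- r) chi M0 (F i).
Proof.
elim: r => [|x r IH]; first by rewrite !big_nil chi0.
by rewrite !big_cons chiD IH.
Qed.

Lemma chiX M0 m : chi M0 'X_[m] = if Eqb m M0 then 1 else 0.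
Proof. by rewrite /chi msuppX big_seq1 mcoeffX eqxx. Qed.

Lemma chi_mulX M0 c U : chi M0 (c * 'X_[U]) =
  \sum_(mm <- msupp c) c@_mm * (if Eqb (mm + U)%MM M0 then 1 else 0).
Proof.
rewrite {1}(mpolyE c) mulr_suml chi_sum; apply: eq_bigr => mm _.
by rewrite -scalerAl -mpolyXD chiZ chiX.
Qed.

Lemma chain M M0 : in_ideal (fun p => exists l, p = uL l - vL l) ('X_[M] - 'X_[M0]) ->
  Eqr M M0.
Proof.
move=> [k [c [g [hg hsum]]]].
have h0 : chi M0 ('X_[M] - 'X_[M0]) = 0.
  rewrite hsum chi_sum big1 // => j _.
  have [l ->] := hg j; have [U hU] := hu l; have [W hW] := hv l.
  rewrite hU hW mulrBr chiB !chi_mulX; apply/eqP; rewrite subr_eq0; apply/eqP.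
  apply: eq_bigr => mm _; congr (_ * _).
  have hst := Eqr_step l mm U W hU hW.
  case: (EqbP (mm + U)%MM M0); case: (EqbP (mm + W)%MM M0) => // h1 h2; exfalso.
    by apply: h1; apply: Eqr_trans h2; apply: Eqr_sym.
  by apply: h2; apply: Eqr_trans h1.
move: h0; rewrite chiB !chiX.
case: (EqbP M M0) => // _; case: (EqbP M0 M0) => [_|]; last by move: (Eqr_refl M0).
by rewrite sub0r => /eqP; rewrite oppr_eq0 oner_eq0.
Qed.

Lemma full_conn P P' : sig P = sig P' -> Conn P P'.
Proof.
move=> hs.
have hk : phi K e' ('X_[pim P] - 'X_[pim P']) = 0.
  by rewrite phiB !phi'X -!piv_sig hs subrr.
have := chain _ _ (proj1 (hgen _) hk) => -[_ H].
exact: H.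
Qed.

Lemma ideal_sum_cond (I : Type) (r : seq I) (Pr : pred I) (F : I -> {mpoly K[n]}) :
  (forall i, Pr i -> in_ideal Gset (F i)) -> in_ideal Gset (\sum_(i <- r | Pr i) F i).
Proof.
move=> h; elim: r => [|x r IH]; first by rewrite big_nil; apply: ideal0.
rewrite big_cons; case: ifP => hx //; apply: idealD => //; exact: h.
Qed.

Lemma big_pick (r : seq 'X_{1..n}) (Pr : pred 'X_{1..n}) (F : 'X_{1..n} -> K) m :
  uniq r -> \sum_(x <- r | Pr x) F x * (x == m)%:R = if (m \in r) && Pr m then F m else 0.
Proof.
elim: r => [|x r IH] /=; first by rewrite big_nil.
move/andP=> [hx hur]; rewrite big_cons IH // in_cons.
case: (eqVneq x m) => [<-|hxm] /=.
  by rewrite (negbTE hx) /=; case: (Pr x); rewrite ?mulr1 ?addr0.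
by case: (Pr x); rewrite ?mulr0 ?add0r.
Qed.

Lemma mcoeff_phi p (m0 : 'X_{1..n}) :
  (phi K e p)@_(mx (sig m0)) = \sum_(mm <- msupp p | sig mm == sig m0) p@_mm.
Proof.
rewrite {1}(mpolyE p) phi_sum raddf_sum [RHS]big_mkcond /=; apply: eq_bigr => mm _.
rewrite phiZ phiX mcoeffZ xmonE mcoeffX (inj_eq (@mx_inj _)).
by case: (sig mm == sig m0); rewrite ?mulr1 ?mulr0.
Qed.

Lemma ker_ideal p : phi K e p = 0 -> in_ideal Gset p.
Proof.
have [N hN] : exists N, (size (msupp p) <= N)%N by exists (size (msupp p)).
elim: N p hN => [|N IH] p hN hp.
  move: hN; rewrite leqn0 size_eq0 => /eqP /msuppnil0 ->; exact: ideal0.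
case: (eqVneq p 0) => [->|hp0]; first exact: ideal0.
have [m0 hm0] : exists m0, m0 \in msupp p.
  have : msupp p != [::] by rewrite msupp_eq0.
  by case: (msupp p) => // m0 s _; exists m0; rewrite inE eqxx.
have hcs : \sum_(mm <- msupp p | sig mm == sig m0) p@_mm = 0.
  by rewrite -mcoeff_phi hp mcoeff0.
pose q := \sum_(mm <- msupp p | sig mm == sig m0) p@_mm *: ('X_[mm] - 'X_[m0]).
have hq : in_ideal Gset q.
  apply: ideal_sum_cond => mm /eqP hs; rewrite -mul_mpolyC; apply: idealM.
  exact: full_conn.
have hpq : phi K e q = 0.
  by rewrite phi_sum big1 // => mm /eqP hs; rewrite phiZ phiB !phiX hs subrr scaler0.
have hcoef : forall m, (p - q)@_m = if sig m == sig m0 then 0 else p@_m.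
  move=> m; rewrite mcoeffB raddf_sum /=.
  under eq_bigr do rewrite mcoeffZ mcoeffB !mcoeffX mulrBr.
  rewrite sumrB -mulr_suml hcs mul0r oppr0 addr0 big_pick; last exact: msupp_uniq.
  case: (boolP (m \in msupp p)) => hmm /=; case: ifP => _; rewrite ?subrr ?subr0 //.
  by move: hmm; rewrite -mcoeff_eq0 => /eqP ->.
have hsub : {subset msupp (p - q) <= rem m0 (msupp p)}.
  move=> m; rewrite (mem_rem_uniq _ (msupp_uniq p)) inE mcoeff_msupp hcoef.
  case: ifP => hs; first by rewrite eqxx.
  move=> hpm; rewrite mcoeff_msupp hpm andbT.
  by apply/eqP => em; rewrite em eqxx in hs.
have hsz : (size (msupp (p - q)) <= N)%N.
  have := uniq_leq_size (msupp_uniq _) hsub; rewrite size_rem // => h.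
  by move: hN h; move: (size (msupp p)) (size (msupp (p - q))) => x y; lia.
have := IH (p - q) hsz; rewrite phiB hp hpq subrr => /(_ erefl) h.
have -> : p = q + (p - q) by rewrite addrC subrK.
exact: idealD.
Qed.

Lemma Gset_ker g : Gset g -> phi K e g = 0.
Proof.
case=> [[l [s [hS hx ->]]] | [i [j [k [l [hi hj hk hl ->]]]]]].
  have [_ _ h1] := hpsi _ _ (hu l) hS hx.
  have [_ _ h2] := hpsi _ _ (hv l) hS (etrans hx (phi'_uv l)).
  by rewrite phiB h1 h2 subrr.
rewrite phiB !phiM !phiX !xmonD; apply/eqP; rewrite subr_eq0; apply/eqP.
congr (xmon K _); apply/ffunP => a; rewrite [LHS]ffunE [RHS]ffunE !sigU hk hl !ffunE.
have h21 : (a2 == a1) = false by rewrite eq_sym (negbTE hne).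
case: (eqVneq a a1) => [->|ha1].
  rewrite ?eqxx (negbTE hne) /=.
  by move: hi; move: (e i a1) (e j a1) => x y; lia.
case: (eqVneq a a2) => [->|ha2].
  rewrite ?eqxx ?h21 /=.
  by move: hj; move: (e i a2) (e j a2) => x y; lia.
by rewrite ?(negbTE ha1) ?(negbTE ha2) /= !addn0 !subn0.
Qed.

Lemma sound p : in_ideal Gset p -> phi K e p = 0.
Proof.
move=> [k [c [g [hg ->]]]]; rewrite phi_sum big1 // => j _.
by rewrite phiM (Gset_ker (g j) (hg j)) mulr0.
Qed.

Lemma main_gen : generates_kernel Gset (phi K e).
Proof. by move=> p; split; [exact: ker_ideal | exact: sound]. Qed.

End Main.

Theorem proposition9p4
  (R : realType)                              (* C := R[i] *)
  (V A : finType) (src tgt : A -> V)          (* the quiver Q *)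
  (theta : V -> int)
  (a1 a2 : A)
  (hacyc : acyclic src tgt)
  (hne : a1 != a2) (hsrc : src a1 = src a2) (htgt : tgt a1 = tgt a2)
  (* variables of F: t_{e i}, i < n, for e a bijection onto nabla(Q,theta) cap Z^{Q_1} *)
  (n : nat) (e : 'I_n -> {ffun A -> nat})
  (he : enumerates src tgt theta e)
  (* variables of F': t_{e' j}, j < n', for Q' (arrows arrQ' a2, alpha = a1) *)
  (n' : nat) (e' : 'I_n' -> {ffun arrQ' a2 -> nat})
  (he' : enumerates (fun b : arrQ' a2 => src (val b)) (fun b : arrQ' a2 => tgt (val b)) theta e')
  (* the algebra map pi : F -> F', t_m |-> t_{pi m} *)
  (pv : 'I_n -> 'I_n') (hpv : forall i, e' (pv i) = piv a1 a2 (e i))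
  (* binomial generators u_lambda - v_lambda of ker phi' *)
  (Lambda : Type) (u v : Lambda -> {mpoly R[i][n']})
  (hu : forall l, is_monomial (u l)) (hv : forall l, is_monomial (v l))
  (hgen : generates_kernel (fun p => exists l, p = u l - v l) (phi R[i] e'))
  (* the fixed lifts psi_s *)
  (psi : {ffun A -> nat} -> {mpoly R[i][n']} -> {mpoly R[i][n]})
  (hpsi : forall (s : {ffun A -> nat}) (w : {mpoly R[i][n']}),
      is_monomial w -> in_S src tgt theta s ->
      xmon R[i] (piv a1 a2 s) = phi R[i] e' w ->
      [/\ is_monomial (psi s w), piF pv (psi s w) = w & phi R[i] e (psi s w) = xmon R[i] s]) :
  generates_kernel
    (fun p : {mpoly R[i][n]} =>
       (* G_1 *)
       (exists (l : Lambda) (s : {ffun A -> nat}),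
          [/\ in_S src tgt theta s, xmon R[i] (piv a1 a2 s) = phi R[i] e' (u l)
            & p = psi s (u l) - psi s (v l)])
       \/
       (* G_2 : t_m t_n - t_{m + eps2 - eps1} t_{n + eps1 - eps2} *)
       (exists i j k l : 'I_n,
          [/\ (0 < e i a1)%N, (0 < e j a2)%N,
              e k = shift (e i) a2 a1, e l = shift (e j) a1 a2
            & p = 'X_i * 'X_j - 'X_k * 'X_l]))
    (phi R[i] e).
Proof. by apply: main_gen. Qed.
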